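(* Let $D$ be a digraph and $v_0\in V(D)$ such that $d^+(v_0)\ge1$ and $d^+(v)\ge2$ for every $v\in V(D)\setminus\{v_0\}$. Then $D$ contains a subdivision of $\overleftrightarrow{K}_3-e$.
   Context: Digraphs are finite, loopless, have no parallel arcs, but may contain digons. $d^+(v)$ is the out-degree of $v$. $\overleftrightarrow{K}_3$ is the bioriented triangle (both arcs between every pair of its three vertices), and $\overleftrightarrow{K}_3-e$ is obtained from it by deleting one arc. A subdivision of a digraph $F$ is obtained by replacing each arc $(x,y)$ by a directed $x$-$y$-path, with paths for different arcs internally vertex-disjoint. *)

(* Defs.v *)
From mathcomp Require Import all_boot.
Set Implicit Arguments. Unset Strict Implicit. Unset Printing Implicit Defensive.

(* A digraph on a finite vertex type V is an arc relation D : rel V.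
   Parallel arcs are excluded automatically; digons are allowed
   (D x y and D y x); looplessness is an explicit hypothesis. *)
Definition loopless (V : finType) (D : rel V) : Prop := forall v, ~~ D v v.

Definition outdeg (V : finType) (D : rel V) (v : V) : nat := #|[set w | D v w]|.

(* D contains a subdivision of F: branch vertices phi (injective), and for
   each arc (u,w) of F a directed phi u - phi w path in D, given by its
   sequence of internal vertices P u w; the whole path has distinct
   vertices; internal vertices are not branch vertices, and the internal
   vertex sets of paths for distinct arcs are disjoint. *)
Definition contains_subdivision (U V : finType) (F : rel U) (D : rel V) : Prop :=
  exists (phi : U -> V) (P : U -> U -> seq V),
    [/\ injective phi,
        (forall u w, F u w ->
           path D (phi u) (rcons (P u w) (phi w)) &&
           uniq (phi u :: rcons (P u w) (phi w))),
        (forall u w x, F u w -> x \in P u w -> x \notin codom phi) &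
        (forall u w u' w', F u w -> F u' w' -> (u, w) != (u', w') ->
           [disjoint P u w & P u' w'])].

Definition K3_minus_e : rel 'I_3 :=
  fun i j => (i != j) && ~~ ((val i == 2) && (val j == 0)).

(* Main.v *)
Require Import Defs.
From mathcomp Require Import all_boot zify.
Set Implicit Arguments. Unset Strict Implicit. Unset Printing Implicit Defensive.


Section Aux.
Variable V : finType.

Definition nb (D : rel V) (X : {set V}) v := [set w in X | D v w].
Definition od (D : rel V) (X : {set V}) v := #|nb D X v|.
Definition inb (D : rel V) (X : {set V}) w := [set v in X | D v w].
Definition arcs (D : rel V) (X : {set V}) := \sum_(v in X) od D X v.

Lemma card_sep (X : {set V}) (P : pred V) :
  #|[set w in X | P w]| = \sum_(w in X) (P w : nat).
Proof.
rewrite -sum1_card (eq_bigl (fun w => (w \in X) && P w)); last by move=> w; rewrite inE.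
rewrite big_mkcondr /=; apply: eq_bigr => w _; by case: (P w).
Qed.

Lemma double_count D X : arcs D X = \sum_(w in X) #|inb D X w|.
Proof.
rewrite /arcs /od /nb /inb.
under eq_bigr do rewrite card_sep.
under [RHS]eq_bigr do rewrite card_sep.
by rewrite exchange_big.
Qed.

Lemma odD1 D X v y : od D X v = (y \in nb D X v) + od D (X :\ y) v.
Proof.
rewrite /od; have -> : nb D (X :\ y) v = nb D X v :\ y.
  by apply/setP=> w; rewrite !inE andbA.
by rewrite -cardsD1.
Qed.

Lemma arcs_del (D D' : rel V) (X : {set V}) (y : V) : y \in X -> 0 < od D X y ->
  (forall v, v \in X :\ y -> od D' (X :\ y) v <= od D X v) ->
  arcs D' (X :\ y) < arcs D X.
Proof.
move=> yX ody H; rewrite /arcs (bigD1 y yX) /=.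
have -> : \sum_(i in X | i != y) od D X i = \sum_(i in X :\ y) od D X i.
  by apply: eq_bigl => i; rewrite !inE andbC.
have : \sum_(v in X :\ y) od D' (X :\ y) v <= \sum_(i in X :\ y) od D X i.
  by apply: leq_sum.
lia.
Qed.


Definition subin (D : rel V) (X : {set V}) : Prop :=
  exists (phi : 'I_3 -> V) (P : 'I_3 -> 'I_3 -> seq V),
    [/\ injective phi,
        (forall u w, K3_minus_e u w ->
           path D (phi u) (rcons (P u w) (phi w)) &&
           uniq (phi u :: rcons (P u w) (phi w))),
        (forall u w x, K3_minus_e u w -> x \in P u w -> x \notin codom phi),
        (forall u w u' w', K3_minus_e u w -> K3_minus_e u' w' -> (u, w) != (u', w') ->
           [disjoint P u w & P u' w']) &
        ((forall u, phi u \in X) /\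
         (forall u w x, K3_minus_e u w -> x \in P u w -> x \in X))].

Lemma subin_mono (D1 D2 : rel V) (X1 X2 : {set V}) :
  subrel D1 D2 -> X1 \subset X2 -> subin D1 X1 -> subin D2 X2.
Proof.
move=> sD sX [phi [P [inj hp hc hd [hX hPX]]]].
exists phi, P; split => //.
- move=> u w F; case/andP: (hp u w F) => p1 p2; rewrite p2 andbT.
  exact: sub_path p1.
- split=> [u|u w x F xP]; first exact: (subsetP sX).
  exact: (subsetP sX) (hPX u w x F xP).
Qed.


Section Bypass.
Variables (D : rel V) (x y y1 : V).
Let D' : rel V := [rel a b | D a b || (a == x) && (b == y1)].
Hypotheses (Dxy : D x y) (Dyy1 : D y y1).

Fixpoint insy (h : V) (s : seq V) (t : V) : seq V :=
  match s with
  | [::] => if D h t then [::] else [:: y]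
  | a :: s' => (if D h a then [::] else [:: y]) ++ a :: insy a s' t
  end.

Lemma insy_spec h s t : path D' h (rcons s t) -> uniq (h :: rcons s t) ->
  y \notin h :: rcons s t ->
  [/\ path D h (rcons (insy h s t) t), uniq (h :: rcons (insy h s t) t) &
   forall z, z \in insy h s t ->
     (z \in s) || [&& z == y, x \in h :: s & y1 \in rcons s t]].
Proof.
elim: s h => [|a s IH] h.
- rewrite /= !inE !andbT => /orP [] Dht ht.
  + by rewrite Dht /= Dht !inE ht.
  + case: ifP => Dht'; first by rewrite /= Dht' !inE ht.
    case/andP: Dht => /eqP hx /eqP ty1; subst.
    rewrite /= Dxy Dyy1 !inE negb_or => /andP [yx yy1].
    rewrite (eq_sym x y) (negbTE yx) (negbTE ht) yy1; split=> // z.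
    by rewrite !inE => ->; rewrite !eqxx.
- rewrite [path _ _ _]/= [uniq _]/= [insy _ _ _]/= !inE !mem_rcons !inE !negb_or.
  move=> /andP [Dha pa] /and3P [/and3P [ha ht hs] /andP [hat has] ur] /and4P [yh ya yt ys].
  have ua : uniq (a :: rcons s t) by rewrite /= mem_rcons inE negb_or hat has ur.
  have ya' : y \notin a :: rcons s t by rewrite inE mem_rcons inE !negb_or ya yt ys.
  have [pr ur' mr] := IH a pa ua ya'.
  have hr : h \notin insy a s t.
    apply/negP => /mr /orP []; first by rewrite (negbTE hs).
    by case/and3P=> /eqP hy; rewrite hy eqxx in yh.
  case: ifP => Dha' /=.
  + rewrite Dha' pr; split=> //.
    * rewrite inE mem_rcons inE !negb_or ha ht hr /=.
      by move: ur'; rewrite /= mem_rcons inE.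
    * move=> z; rewrite in_cons => /orP [/eqP ->|]; first by rewrite in_cons eqxx.
      move=> /mr /orP [zs|/and3P [zy xa ys1]]; first by rewrite in_cons zs orbT.
      apply/orP; right; rewrite zy /=.
      by move: xa ys1; rewrite !inE mem_rcons !inE => -> ->; rewrite !orbT.
  + move: Dha; rewrite /D' /= Dha' /= => /andP [/eqP hx /eqP ay1]; subst h a.
    rewrite Dxy Dyy1 pr; split=> //.
    * have yr : y \notin insy y1 s t.
        apply/negP => /mr /orP []; first by rewrite (negbTE ys).
        by case/and3P=> _; rewrite inE (negbTE ha) (negbTE hs).
      move: ur'; rewrite /= !inE !mem_rcons !inE !negb_or (eq_sym x y) yh ha ht hr yr ya yt /=.
      by [].
    * move=> z; rewrite !in_cons => /orP [/eqP ->|/orP [/eqP ->|]].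
      - by rewrite !eqxx /= orbT.
      - by rewrite eqxx.
      move=> /mr /orP [zs|/and3P [zy xa ys1]]; first by rewrite zs orbT.
      apply/orP; right; rewrite zy /=.
      by move: xa ys1; rewrite !inE mem_rcons !inE => -> ->; rewrite !orbT.
Qed.

Lemma subin_bypass (X : {set V}) : y \in X -> subin D' (X :\ y) -> subin D X.
Proof.
move=> yX [phi [P [inj hp hc hd [hX hPX]]]].
have nX : forall z, z \in X :\ y -> z != y by move=> z; rewrite !inE => /andP [].
have yn : forall u w, K3_minus_e u w -> y \notin phi u :: rcons (P u w) (phi w).
  move=> u w F; rewrite in_cons mem_rcons in_cons; apply/negP => /or3P [/eqP E|/eqP E|E].
  - by have := nX _ (hX u); rewrite -E eqxx.
  - by have := nX _ (hX w); rewrite -E eqxx.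
  - by have := nX _ (hPX u w y F E); rewrite eqxx.
have uniq_pt : forall v u w u' w' (c c' : 'I_3), K3_minus_e u w -> K3_minus_e u' w' ->
    (u, w) != (u', w') -> v \in phi c :: P u w -> v \in phi c' :: P u' w' ->
    v = phi c /\ v = phi c'.
  move=> v u w u' w' c c' F F' neq; rewrite !in_cons.
  move=> /orP [/eqP e1|vP] /orP [/eqP e2|vP'] //.
  - by have := hc _ _ _ F' vP'; rewrite e1 codom_f.
  - by have := hc _ _ _ F vP; rewrite e2 codom_f.
  - by rewrite (disjointFr (hd _ _ _ _ F F' neq) vP) in vP'.
exists phi, (fun u w => insy (phi u) (P u w) (phi w)); split => //.
- move=> u w F; case/andP: (hp u w F) => pp up.
  by have [p1 u1 _] := insy_spec pp up (yn u w F); rewrite p1 u1.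
- move=> u w z F; case/andP: (hp u w F) => pp up; have [_ _ m] := insy_spec pp up (yn u w F).
  move=> /m /orP [zP|/and3P [/eqP -> _ _]]; first exact: hc zP.
  apply/codomP => [[i yi]]; by have := nX _ (hX i); rewrite -yi eqxx.
- move=> u w u' w' F F' neq; rewrite disjoint_has; apply/hasPn => z zA; apply/negP => zB.
  case/andP: (hp u w F) => pp up; have [_ _ m1] := insy_spec pp up (yn u w F).
  case/andP: (hp u' w' F') => pp' up'; have [_ _ m2] := insy_spec pp' up' (yn u' w' F').
  case/orP: (m1 z zA) => [zP|/and3P [/eqP zy x1 y11]];
    case/orP: (m2 z zB) => [zP'|/and3P [/eqP zy' x2 y12]].
  + by rewrite (disjointFr (hd _ _ _ _ F F' neq) zP) in zP'.
  + by have := nX _ (hPX _ _ _ F zP); rewrite zy' eqxx.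
  + by have := nX _ (hPX _ _ _ F' zP'); rewrite zy eqxx.
  + have [xu xu'] := uniq_pt x u w u' w' u u' F F' neq x1 x2.
    rewrite mem_rcons in y11; rewrite mem_rcons in y12.
    have [yw yw'] := uniq_pt y1 u w u' w' w w' F F' neq y11 y12.
    have eu : u = u' by apply: inj; rewrite -xu -xu'.
    have ew : w = w' by apply: inj; rewrite -yw -yw'.
    by rewrite eu ew eqxx in neq.
- split=> [u|u w z F]; first by have := hX u; rewrite inE => /andP [].
  case/andP: (hp u w F) => pp up; have [_ _ m] := insy_spec pp up (yn u w F).
  move=> /m /orP [zP|/and3P [/eqP -> _ _]] //.
  by have := hPX _ _ _ F zP; rewrite inE => /andP [].
Qed.

End Bypass.

Lemma final_config (D : rel V) (X : {set V}) (x y z : V) (s : seq V) :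
  x != y -> y != z -> x != z -> D x y -> D y x -> D y z -> D x z ->
  path D z (rcons s x) -> uniq (z :: rcons s x) -> y \notin s ->
  x \in X -> y \in X -> z \in X -> {subset s <= X} -> subin D X.
Proof.
move=> xy yz xz Dxy Dyx Dyz Dxz ps us ys xX yX zX sX.
pose phi := fun i : 'I_3 => if val i == 0 then y else if val i == 1 then x else z.
pose P := fun u w : 'I_3 => if (val u == 2) && (val w == 1) then s else [::].
have zs : z \notin s by move: us; rewrite /= mem_rcons inE negb_or => /andP [/andP [_ ->]].
have xs : x \notin s by move: us; rewrite /= rcons_uniq => /andP [_ /andP []].
exists phi, P; split.
- move=> [[|[|[|i]]] Hi] [[|[|[|j]]] Hj] //= E; try (by apply: val_inj);
    move: E; rewrite /phi /= => E; subst;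
    by rewrite ?eqxx in xy yz xz.
- move=> [[|[|[|i]]] Hi] [[|[|[|j]]] Hj] //= _; rewrite /phi /P /= ?Dxy ?Dyx ?Dyz ?Dxz ?ps ?us //=;
    rewrite !inE ?andbT; apply/negP => /eqP E; subst;
    by rewrite ?eqxx in xy yz xz.
- move=> [[|[|[|i]]] Hi] [[|[|[|j]]] Hj] v //= _; rewrite /P /= ?inE // => vs.
  apply/codomP => [[k]]; case: k => [[|[|[|k]]] Hk] //= E; subst.
  + by rewrite vs in ys.
  + by rewrite vs in xs.
  + by rewrite vs in zs.
- move=> [[|[|[|i]]] Hi] [[|[|[|j]]] Hj] [[|[|[|i']]] Hi'] [[|[|[|j']]] Hj'] //= _ _;
    rewrite /P /= ?disjoint0 // => _; rewrite disjoint_has; by apply/hasPn => v _; rewrite in_nil.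
- split.
  + by move=> [[|[|[|i]]] Hi]; rewrite /phi.
  + move=> [[|[|[|i]]] Hi] [[|[|[|j]]] Hj] v //= _; rewrite /P /= ?inE //; exact: sX.
Qed.

Lemma arcs_lt (D D' : rel V) (X : {set V}) v : v \in X ->
  (forall a, a \in X -> od D' X a <= od D X a) -> od D' X v < od D X v ->
  arcs D' X < arcs D X.
Proof.
move=> vX H Hv; rewrite /arcs (bigD1 v vX) [X in _ < X](bigD1 v vX) /=.
have : \sum_(i in X | i != v) od D' X i <= \sum_(i in X | i != v) od D X i.
  by apply: leq_sum => i /andP [iX _]; apply: H.
by move=> Hs; rewrite -addSn; apply: leq_add.
Qed.

Lemma arcs_mono (D : rel V) (A B : {set V}) : A \subset B -> arcs D A <= arcs D B.
Proof.
move=> AB; rewrite /arcs big_mkcond [X in _ <= X]big_mkcond /=.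
apply: leq_sum => v _; case: ifP => vA; last by [].
rewrite (subsetP AB v vA); apply: subset_leq_card; apply/subsetP => w.
by rewrite !inE => /andP [wA ->]; rewrite (subsetP AB w wA).
Qed.

Lemma path_in (D : rel V) (A : {set V}) z q :
  path [rel a b | (a \in A) && (b \in A) && D a b] z q -> {subset q <= A}.
Proof.
elim: q z => [|a q IH] z //= /andP [/andP [/andP [_ aA] _] pq] v.
by rewrite in_cons => /orP [/eqP ->|vq]; [exact: aA | exact: IH _ pq v vq].
Qed.

Lemma od_del (D : rel V) (X : {set V}) v y : ~~ D v y -> od D (X :\ y) v = od D X v.
Proof. by move=> nD; rewrite (odD1 D X v y) inE (negbTE nD) andbF. Qed.

Lemma od_del_le (D : rel V) (X : {set V}) v y : od D (X :\ y) v <= od D X v.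
Proof. by rewrite (odD1 D X v y) leq_addl. Qed.

End Aux.


Section Main.
Variable V : finType.

Lemma main (n : nat) : forall (D : rel V) (X : {set V}) (e : V),
  arcs D X <= n -> (forall v, ~~ D v v) -> e \in X -> 0 < od D X e ->
  (forall v, v \in X -> v != e -> 1 < od D X v) -> subin D X.
Proof.
elim: n => [|n IH] D X e.
  move=> H0 _ eX ode _; move: H0; rewrite /arcs (bigD1 e eX) /=; lia.
move=> Hn ll eX ode odv.
have nbP : forall a w, (w \in nb D X a) = (w \in X) && D a w by move=> a w; rewrite inE.
case: (pickP (fun v => (v \in X) && (if v == e then 1 < od D X v else 2 < od D X v))) =>
  [v /andP [vX sl] | tight].
  have hv0 : 0 < od D X v by case: (v == e) sl; lia.
  move: (hv0); rewrite /od card_gt0 => /set0Pn [w]; rewrite nbP => /andP [wX Dvw].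
  pose D' := [rel a b | D a b && ((a != v) || (b != w))].
  have odD' : forall a, od D' X a = od D X a - (a == v).
    move=> a; case: (eqVneq a v) => [->|av].
    - rewrite /od [X in _ = X - _](cardsD1 w (nb D X v)) nbP wX Dvw /= addKn.
      apply: eq_card => b; rewrite !inE /= eqxx /=.
      by case: (b == w); rewrite ?andbF ?andbT.
    - rewrite /= subn0 /od; apply: eq_card => b; rewrite !inE /= av /=.
      by rewrite andbT.
  have Hlt : arcs D' X < arcs D X.
    apply: (arcs_lt vX) => [a _|]; rewrite odD' ?eqxx; lia.
  apply: (subin_mono (D1 := D')) (subxx X) _; first by move=> a b /andP [].
  apply: (IH D' X e) => //.
  - lia.
  - by move=> a; rewrite /= (negbTE (ll a)).
  - rewrite odD'; move: sl; case: (eqVneq v e) => [<-|ve] sl; rewrite ?eqxx /=; first lia.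
    by rewrite subn0.
  - move=> a aX ae; rewrite odD'; case: (eqVneq a v) => [av|av] /=.
    + by move: sl; rewrite -av (negbTE ae); lia.
    + by rewrite subn0; apply: odv.
have tightv : forall v, v \in X -> od D X v = (if v == e then 1 else 2).
  move=> v vX; move: (tight v); rewrite vX /=; case: (eqVneq v e) => [->|ve] /= h.
  - by move: ode h; lia.
  - by move: (odv v vX ve) h; lia.
case: (pickP (fun y => (y \in X) && (#|inb D X y| <= 1))) => [y /andP [yX iny] | none]; last first.
  exfalso.
  have h1 : arcs D X < \sum_(v in X) 2.
    rewrite /arcs (bigD1 e eX) [X in _ < X](bigD1 e eX) /= tightv // eqxx.
    rewrite (eq_bigr (fun _ => 2)); first by rewrite ltn_add2r.
    by move=> i /andP [iX ie]; rewrite tightv // (negbTE ie).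
  have h2 : \sum_(v in X) 2 <= \sum_(w in X) #|inb D X w|.
    apply: leq_sum => w wX; move: (none w); rewrite wX /= => /negbT; rewrite -ltnNge.
    by [].
  by have := leq_trans h1 h2; rewrite -double_count ltnn.
have uin : forall v v', v \in X -> D v y -> v' \in X -> D v' y -> v = v'.
  move=> v v' vX Dv v'X Dv'; have := card_le1_eqP iny.
  by move=> /(_ v' v); rewrite !inE vX Dv v'X Dv' => ->.
have Xsub : forall z, X :\ z \subset X by move=> z; apply: subD1set.
have hv2 : forall v, v \in X -> v != e -> od D X v = 2 by move=> v vX ve; rewrite tightv // (negbTE ve).
case: (eqVneq y e) => [ye|ye].
  subst y.
  have Hlt : forall D', (forall v, v \in X :\ e -> od D' (X :\ e) v <= od D X v) -> arcs D' (X :\ e) <= n.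
    by move=> D' H; have := arcs_del eX ode H; lia.
  case: (pickP (fun x => (x \in X) && D x e)) => [x /andP [xX Dxe] | nox].
  + have xe : x != e by apply/eqP => E; move: Dxe; rewrite E => Dee; have := ll e; rewrite Dee.
    apply: (subin_mono (D1 := D)) (Xsub e) _ => //.
    apply: (IH D (X :\ e) x) => //.
    * by apply: Hlt => v _; apply: od_del_le.
    * by rewrite !inE xe xX.
    * have := odD1 D X x e; rewrite hv2 //; case: (e \in nb D X x) => /=; lia.
    * move=> v; rewrite !inE => /andP [ve vX] vx.
      rewrite od_del ?hv2 //; apply/negP => Dve.
      by rewrite (uin v x vX Dve xX Dxe) eqxx in vx.
  + move: (ode); rewrite /od card_gt0 => /set0Pn [w]; rewrite inE => /andP [wX Dew].
    have we : w != e by apply/eqP => E; move: Dew; rewrite E => Dee; have := ll e; rewrite Dee.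
    apply: (subin_mono (D1 := D)) (Xsub e) _ => //.
    apply: (IH D (X :\ e) w) => //.
    * by apply: Hlt => v _; apply: od_del_le.
    * by rewrite !inE we wX.
    * rewrite od_del ?hv2 //; by move: (nox w); rewrite wX /= => ->.
    * move=> v; rewrite !inE => /andP [ve vX] vw.
      by rewrite od_del ?hv2 //; move: (nox v); rewrite vX /= => ->.
have Hlt : forall D', (forall v, v \in X :\ y -> od D' (X :\ y) v <= od D X v) -> arcs D' (X :\ y) <= n.
  move=> D' H; have : 0 < od D X y by rewrite hv2.
  by move=> h; have := arcs_del yX h H; lia.
case: (pickP (fun x => (x \in X) && D x y)) => [x /andP [xX Dxy] | nox]; last first.
  apply: (subin_mono (D1 := D)) (Xsub y) _ => //.
  apply: (IH D (X :\ y) e) => //.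
  * by apply: Hlt => v _; apply: od_del_le.
  * by rewrite !inE eq_sym ye eX.
  * by rewrite od_del //; move: (nox e); rewrite eX /= => ->.
  * move=> v; rewrite !inE => /andP [vy vX] ve.
    by rewrite od_del ?hv2 //; move: (nox v); rewrite vX /= => ->.
have xy : x != y by apply/eqP => E; move: Dxy; rewrite E => Dee; have := ll y; rewrite Dee.
case: (pickP (fun y1 => [&& y1 \in X, D y y1, y1 != x & ~~ D x y1])) =>
  [y1 /and4P [y1X Dyy1 y1x nDxy1] | nobp].
  pose D' := [rel a b | D a b || (a == x) && (b == y1)].
  have y1y : y1 != y by apply/eqP => E; move: Dyy1; rewrite E => Dee; have := ll y; rewrite Dee.
  have odeq : forall v, v \in X :\ y -> od D' (X :\ y) v = od D X v.
    move=> v; rewrite !inE => /andP [vy vX]; case: (eqVneq v x) => [->|vx].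
    - rewrite /od; have -> : nb D' (X :\ y) x = y1 |: (nb D X x :\ y).
        apply/setP => b; rewrite !inE /= eqxx /=.
        case: (eqVneq b y1) => [->|by1]; first by rewrite y1y y1X !orbT.
        by rewrite orbF andbA.
      rewrite cardsU1 [in RHS](cardsD1 y (nb D X x)) !inE y1y y1X nDxy1 yX Dxy.
      by [].
    - apply: eq_card => b; rewrite !inE /= (negbTE vx) /= orbF.
      case: (eqVneq b y) => [->|] //=; rewrite yX /=.
      apply/esym/negbTE/negP => Dvy.
      by rewrite (uin v x vX Dvy xX Dxy) eqxx in vx.
  apply: (subin_bypass Dxy Dyy1 yX).
  apply: (IH D' (X :\ y) e) => //.
  * by apply: Hlt => v vX'; rewrite odeq.
  * move=> a; rewrite /= (negbTE (ll a)) /=; apply/negP => /andP [/eqP E /eqP E'].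
    by move: y1x; rewrite -E' -E eqxx.
  * by rewrite !inE eq_sym ye eX.
  * by rewrite odeq // !inE eq_sym ye eX.
  * move=> v vX' ve; rewrite odeq //; apply: odv => //.
    by move: vX'; rewrite inE => /andP [].
have hy2 := hv2 y yX ye.
have sub : nb D X y \subset x |: (nb D X x :\ y).
  apply/subsetP => b; rewrite !inE => /andP [bX Dyb].
  move: (nobp b); rewrite bX Dyb /=.
  case: (eqVneq b x) => [->|bx] //=.
  move/negbFE => Dxb; rewrite Dxb andbT.
  by apply/eqP => E; move: Dyb; rewrite E => Dee; have := ll y; rewrite Dee.
have hx := cardsD1 y (nb D X x); rewrite inE yX Dxy /= in hx.
have odx2 : 2 <= od D X x.
  have h := subset_leq_card sub; rewrite cardsU1 in h.
  rewrite /od in hy2; rewrite hy2 in h; rewrite /od hx.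
  by move: h; case: (x \notin _) => /=; lia.
have xe : x != e by apply/eqP => E; move: odx2; rewrite E tightv // eqxx.
have odx := hv2 x xX xe.
have /cards1P [z Hz] : #|nb D X x :\ y| == 1 by rewrite /od hx in odx; lia.
have : z \in nb D X x :\ y by rewrite Hz set11.
rewrite !inE => /and3P [zy zX Dxz].
rewrite Hz in sub.
have Dyx : D y x.
  apply/negPn/negP => nD; have : nb D X y \subset [set z].
    apply/subsetP => b bN; have := subsetP sub b bN; rewrite !inE => /orP [/eqP E|//].
    by move: bN; rewrite E !inE (negbTE nD) andbF.
  by move/subset_leq_card; rewrite cards1 -/(od D X y) hy2.
have Dyz : D y z.
  apply/negPn/negP => nD; have : nb D X y \subset [set x].
    apply/subsetP => b bN; have := subsetP sub b bN; rewrite !inE => /orP [//|/eqP E].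
    by move: bN; rewrite E !inE (negbTE nD) andbF.
  by move/subset_leq_card; rewrite cards1 -/(od D X y) hy2.
have xz : x != z by apply/eqP => E; move: Dxz; rewrite E => Dee; have := ll z; rewrite Dee.
pose E := [rel a b | (a \in X :\ y) && (b \in X :\ y) && D a b].
have zX' : z \in X :\ y by rewrite !inE zy zX.
case: (boolP (connect E z x)) => [cz | ncz].
  case/connectP: cz => p pp lp; move: lp.
  case/shortenP: pp => p' pp' up' _.
  case/lastP: p' pp' up' => [|s t] pp' up'; first by move=> /= E0; rewrite E0 eqxx in xz.
  rewrite last_rcons => Ext; rewrite -Ext in pp' up'.
  have sX' := path_in pp'.
  apply: (final_config (x := x) (y := y) (z := z) (s := s)) => //.
  - by rewrite eq_sym.
  - by apply: sub_path pp' => a b /andP [].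
  - apply/negP => ys; have := sX' y; rewrite mem_rcons inE ys orbT => /(_ isT).
    by rewrite !inE eqxx.
  - move=> a aS; have := sX' a; rewrite mem_rcons inE aS orbT => /(_ isT).
    by rewrite inE => /andP [].
pose R := [set w | connect E z w].
have RX : forall w, w \in R -> w \in X :\ y.
  move=> w; rewrite inE => /connectP [p pp ->].
  have := mem_last z p; rewrite in_cons => /orP [/eqP ->//|].
  by move=> lp; exact: (@path_in _ D (X :\ y) z p pp _ lp).
have closed : forall v w, v \in R -> w \in X -> D v w -> w \in R.
  move=> v w vR wX Dvw; have vX' := RX v vR.
  case: (eqVneq w y) => [wy|wy].
    have vX : v \in X by move: vX'; rewrite inE => /andP [].
    move: Dvw; rewrite wy => Dvy; have vx := uin v x vX Dvy xX Dxy.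
    by move: vR; rewrite vx inE (negbTE ncz).
  move: vR; rewrite !inE => cv; apply: (connect_trans cv); apply: connect1.
  by rewrite /= vX' !inE wy wX Dvw.
have RsX : R \subset X.
  by apply/subsetP => w /RX; rewrite inE => /andP [].
have odR : forall v, v \in R -> od D R v = od D X v.
  move=> v vR; apply: eq_card => w; rewrite !inE.
  case Dvw: (D v w); rewrite ?andbF ?andbT //.
  apply/idP/idP => [wR|wX]; last by have := closed v w vR wX Dvw; rewrite inE.
  by have := RX w; rewrite inE => /(_ wR); rewrite inE => /andP [].
pose e' := if e \in R then e else z.
have zR : z \in R by rewrite inE connect0.
have e'R : e' \in R by rewrite /e'; case: ifP.
apply: (subin_mono (D1 := D) _ RsX); first by [].
apply: (IH D R e'); [| exact: ll | exact: e'R | |].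
- have h1 : R \subset X :\ x.
    apply/subsetP => w wR; rewrite !inE (subsetP RsX w wR) andbT.
    by apply/eqP => E0; move: wR; rewrite E0 inE (negbTE ncz).
  have h2 := arcs_mono D h1.
  have h3 : arcs D (X :\ x) < arcs D X.
    by apply: arcs_del => //; [rewrite odx | move=> v _; apply: od_del_le].
  by apply: (leq_trans h2); rewrite -ltnS; apply: (leq_trans h3 Hn).
- rewrite (odR _ e'R); have := tightv e' (subsetP RsX _ e'R).
  by case: (e' == e) => ->.
- move=> v vR ve'; rewrite (odR _ vR) hv2; [by [] | exact: (subsetP RsX) |].
  move: ve'; rewrite /e'; case: ifP => [//|eR _].
  by apply/eqP => E0; rewrite -E0 vR in eR.
Qed.
End Main.

Theorem proposition4p1 (V : finType) (D : rel V) (v0 : V) :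
  loopless D ->
  1 <= outdeg D v0 ->
  (forall v, v != v0 -> 2 <= outdeg D v) ->
  contains_subdivision K3_minus_e D.
Proof.
move=> ll h0 h.
have odT : forall v, od D [set: V] v = outdeg D v.
  by move=> v; apply: eq_card => w; rewrite !inE.
have h0' : 0 < od D [set: V] v0 by rewrite odT.
have h' : forall v, v \in [set: V] -> v != v0 -> 1 < od D [set: V] v.
  by move=> v _ vv; rewrite odT; apply: h.
have [phi [P [inj hp hc hd _]]] := main (leqnn _) ll (in_setT v0) h0' h'.
by exists phi, P; split.
Qed.
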